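(* Let $(A,H,D,J)$ be a finite-dimensional real spectral triple and let $B\subseteq\mathrm{End}_{\mathbb{C}}(H)$ be a unital complex $*$-subalgebra such that $B'=B^\circ$ and $\mathcal{C}\ell_D(A)\subseteq B$. Then the following are equivalent: (a) the Hodge property $\mathcal{C}\ell_D(A)'=\mathcal{C}\ell_D(A)^\circ$ holds; (b) $\mathcal{C}\ell_D(A)'\subseteq B^\circ$; (c) $\mathcal{C}\ell_D(A)=B$.
   Context: A finite-dimensional real spectral triple $(A,H,D,J)$ consists of a finite-dimensional complex Hilbert space $H$, a unital (real or complex) $*$-subalgebra $A\subseteq\mathrm{End}_{\mathbb{C}}(H)$, a selfadjoint operator $D$ on $H$, and an antilinear isometry $J$ with $J^2=\varepsilon1$, $JD=\varepsilon'DJ$ ($\varepsilon,\varepsilon'\in\{\pm1\}$; in the even case also $J\gamma=\varepsilon''\gamma J$ for a grading $\gamma$ commuting with $A$ and anticommuting with $D$), such that $[a,JbJ^{-1}]=0$ and $[[D,a],JbJ^{-1}]=0$ for all $a,b\in A$. For $\xi\in\mathrm{End}_{\mathbb{C}}(H)$, $\xi^\circ=J\xi^*J^{-1}$; for a subset $S$, $S^\circ=\{\xi^\circ:\xi\in S\}$ and $S'=\{\xi\in\mathrm{End}_{\mathbb{C}}(H):[\xi,\eta]=0\ \forall\eta\in S\}$. $\mathcal{C}\ell_D(A)$ is the complex $*$-subalgebra of $\mathrm{End}_{\mathbb{C}}(H)$ generated by $A$ and the operators $a[D,b]$, $a,b\in A$. *)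

(* Defs.v *)
(* H = C^n with C = R[i], R : realType (a model of the reals). *)
From HB Require Import structures.
From mathcomp Require Import all_boot all_order all_algebra.
From mathcomp Require Import complex.
From mathcomp Require Import reals.
Set Implicit Arguments. Unset Strict Implicit. Unset Printing Implicit Defensive.
Import Order.TTheory GRing.Theory Num.Theory.
Local Open Scope ring_scope.

Section Defs.
Variable R : realType.
Local Notation C := (R[i]).
Variable n : nat.
Local Notation M := 'M[C]_n.

Definition mset := M -> Prop.

Definition adj (x : M) : M := (map_mx Num.conj x)^T.

(* Antilinear operators on C^n are exactly v |-> U (conj v), U a matrix.
   Such a J is an isometry iff U is unitary.  With this encoding,
   J x J^{-1} has matrix U (conj x) U^{-1}. *)
Definition unitary (U : M) : Prop := adj U *m U = 1%:M.
Definition Jsq (U : M) : M := U *m map_mx Num.conj U.          (* matrix of J^2 *)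
Definition Jconj (U x : M) : M := U *m map_mx Num.conj x *m invmx U.
Definition opp (U x : M) : M := Jconj U (adj x).

Definition comm (x y : M) : M := x *m y - y *m x.
Definition sign (e : C) : Prop := e = 1 \/ e = -1.

Definition real_star_subalg (A : mset) : Prop :=
  A 1%:M /\ A 0 /\
  (forall a b, A a -> A b -> A (a + b)) /\
  (forall (r : C) a, r \is Num.real -> A a -> A (r *: a)) /\
  (forall a b, A a -> A b -> A (a *m b)) /\
  (forall a, A a -> A (adj a)).

Definition cplx_star_subalg (B : mset) : Prop :=
  [/\ B 1%:M,
      (forall a b, B a -> B b -> B (a + b)),
      (forall (z : C) a, B a -> B (z *: a)),
      (forall a b, B a -> B b -> B (a *m b)) &
      (forall a, B a -> B (adj a))].

(* finite-dimensional real spectral triple (A, H = C^n, D, J = U o conj),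
   with KO-signs eps, eps' and, in the even case, a grading gam with sign eps'' *)
Definition real_spectral_triple (A : mset) (D U : M) (eps eps' : C)
    (grading : option (M * C)) : Prop :=
  real_star_subalg A /\
  adj D = D /\
  unitary U /\
  sign eps /\ sign eps' /\
  Jsq U = eps *: 1%:M /\
  Jconj U D = eps' *: D /\
      match grading with
      | None => True
      | Some (gam, eps'') =>
          sign eps'' /\ adj gam = gam /\ gam *m gam = 1%:M /\
          (forall a, A a -> comm gam a = 0) /\
          gam *m D = - (D *m gam) /\
          Jconj U gam = eps'' *: gam
      end /\
  (forall a b, A a -> A b -> comm a (Jconj U b) = 0) /\
  (forall a b, A a -> A b -> comm (comm D a) (Jconj U b) = 0).

Definition opp_set (U : M) (S : mset) : mset := fun x => exists2 y, S y & x = opp U y.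
Definition commutant (S : mset) : mset := fun x => forall y, S y -> x *m y = y *m x.

Definition msubset (S T : mset) : Prop := forall x, S x -> T x.
Definition mseteq (S T : mset) : Prop := forall x, S x <-> T x.

Definition gens (A : mset) (D : M) : mset :=
  fun x => A x \/ exists a b, [/\ A a, A b & x = a *m comm D b].
Definition ClD (A : mset) (D : M) : mset :=
  fun x => forall S : mset, cplx_star_subalg S -> msubset (gens A D) S -> S x.

End Defs.

(* Main.v *)
Require Import Defs.
From HB Require Import structures.
From mathcomp Require Import all_boot all_order all_algebra.
From mathcomp Require Import complex.
From mathcomp Require Import reals.
From mathcomp Require Import sesquilinear spectral.
From Stdlib Require Import Classical.
Set Implicit Arguments. Unset Strict Implicit. Unset Printing Implicit Defensive.
Import Order.TTheory GRing.Theory Num.Theory.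
Local Open Scope ring_scope.

Section Bicomm.
Variables (C : numClosedFieldType) (n : nat) (S : 'M[C]_n -> Prop).
Hypothesis S1 : S 1%:M.
Hypothesis SD : forall a b, S a -> S b -> S (a + b).
Hypothesis SZ : forall (z : C) a, S a -> S (z *: a).
Hypothesis SM : forall a b, S a -> S b -> S (a *m b).
Hypothesis SA : forall a, S a -> S ((map_mx Num.conj a)^T).

Lemma S0 : S 0.
Proof. by rewrite -(scale0r 1%:M); apply: SZ. Qed.

Local Notation N := (n * n)%N.
Definition good (W : 'M[C]_N) := forall v : 'rV[C]_N, (v <= W)%MS -> S (vec_mx v).

Lemma good0 : good 0.
Proof. move=> v; rewrite submx0 => /eqP ->; rewrite linear0; exact: S0. Qed.

Lemma good_adds W s : good W -> S s -> good (W + mxvec s)%MS.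
Proof.
move=> gW Ss v /sub_addsmxP [[a b] /= ->].
rewrite linearD /=; apply: SD; first by apply: gW; exact: submxMl.
by rewrite [b]mx11_scalar mul_scalar_mx linearZ /= mxvecK; apply: SZ.
Qed.

Lemma exists_W : exists W, good W /\ forall s, S s -> (mxvec s <= W)%MS.
Proof.
apply: NNPP => H.
have step : forall k, exists W, good W /\ (k <= \rank W)%N.
  elim=> [|k [W [gW kW]]]; first by exists 0; split; [exact: good0|].
  have [s [Ss nsW]] : exists s, S s /\ ~~ (mxvec s <= W)%MS.
    apply: NNPP => H2; apply: H; exists W; split => // s Ss.
    apply: NNPP => H3; apply: H2; exists s; split => //; exact/negP.
  exists (W + mxvec s)%MS; split; first exact: good_adds.
  have [le eq] := mxrank_leqif_sup (addsmxSl W (mxvec s)).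
  apply: leq_ltn_trans kW _; rewrite ltn_neqAle le andbT eq.
  by rewrite addsmx_sub negb_and nsW orbT.
have [W [_]] := step N.+1; by rewrite ltnNge rank_leq_col.
Qed.

Local Open Scope sesquilinear_scope.

Definition ip (a b : 'M[C]_n) := \sum_i \sum_j a i j * Num.conj (b i j).

Lemma ip_vec a b : (mxvec a *m (mxvec b)^t*) 0 0 = ip a b.
Proof.
rewrite !mxE /ip.
rewrite (reindex (uncurry (@mxvec_index n n))) /=; last exact: curry_mxvec_bij.
rewrite pair_big /=; apply: eq_bigr => [[i j]] _ /=.
by rewrite !mxE !mxvecE.
Qed.

Variable W : 'M[C]_N.
Hypothesis gW : good W.
Hypothesis SW : forall s, S s -> (mxvec s <= W)%MS.
Local Notation Wo := (orthomx Num.conj (hermitian1mx N) W).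

Lemma ortho_iff v : (v <= Wo)%MS <-> forall s, S s -> ip (vec_mx v) s = 0.
Proof.
split.
  move/orthomx1P => H s Ss; rewrite -ip_vec vec_mxK.
  have /submxP [a ->] := SW Ss.
  by rewrite trmx_mul map_mxM mulmxA H mul0mx mxE.
move=> H; apply/orthomx1P; apply/matrixP => i j; rewrite ord1 [RHS]mxE.
have := H _ (gW (row_sub j W)); rewrite -ip_vec !vec_mxK => <-.
by rewrite !mxE; apply: eq_bigr => k _; rewrite !mxE.
Qed.

Lemma ip_mul c y s : ip (c *m y) s = ip y ((map_mx Num.conj c)^T *m s).
Proof.
rewrite /ip.
transitivity (\sum_i \sum_j \sum_p c i p * y p j * Num.conj (s i j)).
  by apply: eq_bigr => i _; apply: eq_bigr => j _; rewrite mxE mulr_suml.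
symmetry; transitivity (\sum_p \sum_j \sum_i y p j * Num.conj ((map_mx Num.conj c)^T p i * s i j)).
  by apply: eq_bigr => i _; apply: eq_bigr => j _; rewrite mxE rmorph_sum mulr_sumr.
symmetry.
rewrite (eq_bigr (fun i => \sum_p \sum_j c i p * y p j * Num.conj (s i j))); last first.
  by move=> i _; rewrite exchange_big.
rewrite exchange_big /=.
apply: eq_bigr => p _; rewrite exchange_big /=.
apply: eq_bigr => j _; apply: eq_bigr => i _.
by rewrite !mxE rmorphM /= conjCK mulrCA mulrA.
Qed.

Lemma perp_mul c y : S c -> (forall s, S s -> ip y s = 0) ->
  forall s, S s -> ip (c *m y) s = 0.
Proof. by move=> Sc Hy s Ss; rewrite ip_mul; apply: Hy; apply: SM => //; apply: SA. Qed.

Definition f (m : 'M[C]_n) : 'M[C]_n := vec_mx (mxvec m *m proj_ortho W).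

Lemma fD a b : f (a + b) = f a + f b.
Proof. by rewrite /f linearD mulmxDl linearD. Qed.
Lemma fZ z a : f (z *: a) = z *: f a.
Proof. by rewrite /f linearZ -scalemxAl linearZ. Qed.
Lemma f0 : f 0 = 0.
Proof. by rewrite /f linear0 mul0mx linear0. Qed.
Lemma f_sum (I : finType) (F : I -> 'M[C]_n) : f (\sum_i F i) = \sum_i f (F i).
Proof. exact: (big_morph f fD f0). Qed.
Lemma fS m : S (f m).
Proof. by apply: gW; apply: proj_ortho_sub. Qed.
Lemma f_id s : S s -> f s = s.
Proof. by move=> Ss; rewrite /f proj_ortho_id ?mxvecK //; apply: SW. Qed.
Lemma f_perp y : (forall s, S s -> ip y s = 0) -> f y = 0.
Proof.
move=> H; rewrite /f proj_ortho_0 ?linear0 //.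
by apply/ortho_iff; rewrite mxvecK.
Qed.
Lemma f_compl m s : S s -> ip (m - f m) s = 0.
Proof.
move=> Ss; have := proj_ortho_compl_sub W (mxvec m).
move/ortho_iff => /(_ s Ss); by rewrite linearB /= mxvecK.
Qed.

Lemma f_comm c m : S c -> f (c *m m) = c *m f m.
Proof.
move=> Sc; have -> : c *m m = c *m f m + c *m (m - f m).
  by rewrite -mulmxDr addrC subrK.
rewrite fD f_id; last by apply: SM => //; apply: fS.
rewrite [f (c *m (m - f m))]f_perp ?addr0 //.
exact: (perp_mul Sc (fun s Ss => f_compl m Ss)).
Qed.

Lemma fE m i k : f m i k = \sum_j \sum_l m j l * f (delta_mx j l) i k.
Proof.
rewrite {1}(matrix_sum_delta m) f_sum summxE; apply: eq_bigr => j _.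
by rewrite f_sum summxE; apply: eq_bigr => l _; rewrite fZ mxE.
Qed.

Definition Q k l : 'M[C]_n := \matrix_(i, j) f (delta_mx j l) i k.

Lemma Q_comm c k l : S c -> Q k l *m c = c *m Q k l.
Proof.
move=> Sc; apply/matrixP => i j; rewrite !mxE.
transitivity (\sum_p f (delta_mx p l) i k * c p j).
  by apply: eq_bigr => p _; rewrite ?mxE.
transitivity ((c *m f (delta_mx j l)) i k); last first.
  by rewrite mxE; apply: eq_bigr => p _; rewrite ?mxE.
rewrite -f_comm //.
have -> : c *m delta_mx j l = \sum_a c a j *: delta_mx a l.
  apply/matrixP => a b; rewrite mxE summxE.
  rewrite (bigD1 j) //= big1 => [|q /negbTE nq]; last by rewrite mxE nq /= mulr0.
  rewrite [RHS](bigD1 a) //= big1 => [|a' /negbTE na]; last by rewrite !mxE eq_sym na /= mulr0.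
  rewrite !mxE !eqxx /= !addr0.
  by case: (b == l); rewrite ?mulr1 ?mulr0.
rewrite f_sum summxE; apply: eq_bigr => a _.
by rewrite fZ [in RHS]mxE mulrC.
Qed.

Lemma bicomm_W x :
  (forall y, (forall z, S z -> y *m z = z *m y) -> x *m y = y *m x) -> S x.
Proof.
move=> Hx; suff -> : x = f x by apply: fS.
apply/matrixP => i k.
have xQ : forall l, x *m Q k l = Q k l *m x.
  by move=> l; apply: Hx => z Sz; apply: Q_comm.
transitivity ((x *m f 1%:M) i k); first by rewrite f_id // mulmx1.
rewrite mx1_sum_delta f_sum mxE.
transitivity (\sum_l (x *m Q k l) i l).
  under eq_bigr do rewrite summxE mulr_sumr.
  rewrite exchange_big /=; apply: eq_bigr => l _; rewrite mxE.
  by apply: eq_bigr => q _; rewrite [in RHS]mxE.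
under eq_bigr do rewrite xQ.
rewrite fE exchange_big /=; apply: eq_bigr => l _; rewrite mxE.
by apply: eq_bigr => p _; rewrite mxE mulrC.
Qed.
End Bicomm.

Lemma bicomm (C : numClosedFieldType) (n : nat) (S : 'M[C]_n -> Prop) :
  S 1%:M ->
  (forall a b, S a -> S b -> S (a + b)) ->
  (forall (z : C) a, S a -> S (z *: a)) ->
  (forall a b, S a -> S b -> S (a *m b)) ->
  (forall a, S a -> S ((map_mx Num.conj a)^T)) ->
  forall x, (forall y, (forall z, S z -> y *m z = z *m y) -> x *m y = y *m x) -> S x.
Proof.
move=> S1 SD SZ SM SA x Hx.
have [W [gW SW]] := exists_W S1 SD SZ.
About exists_W. About bicomm_W.
exact: (bicomm_W S1 SM SA gW SW Hx).
Qed.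

Section Main.
Variable R : realType.
Variable n : nat.

Lemma ClD_alg (A : mset R n) (D : 'M[R[i]]_n) : cplx_star_subalg (ClD A D).
Proof.
split.
- by move=> S [] *.
- by move=> a b Ha Hb S HS Hg; case: (HS) => _ HD _ _ _; apply: HD; [apply: Ha | apply: Hb].
- by move=> z a Ha S HS Hg; case: (HS) => _ _ HZ _ _; apply: HZ; apply: Ha.
- by move=> a b Ha Hb S HS Hg; case: (HS) => _ _ _ HM _; apply: HM; [apply: Ha | apply: Hb].
- by move=> a Ha S HS Hg; case: (HS) => _ _ _ _ HA; apply: HA; apply: Ha.
Qed.
End Main.

Theorem lemma12 (R : realType) (n : nat) (A : mset R n) (D U : 'M[R[i]]_n)
    (eps eps' : R[i]) (grading : option ('M[R[i]]_n * R[i])) (B : mset R n) :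
  real_spectral_triple A D U eps eps' grading ->
  cplx_star_subalg B ->
  mseteq (commutant B) (opp_set U B) ->
  msubset (ClD A D) B ->
  (mseteq (commutant (ClD A D)) (opp_set U (ClD A D)) <->
     msubset (commutant (ClD A D)) (opp_set U B)) /\
  (msubset (commutant (ClD A D)) (opp_set U B) <->
     mseteq (ClD A D) B).
Proof.
move=> _ HB HBo HCB.
have [C1 CD CZ CM CA] := ClD_alg A D.
have K : msubset (commutant (ClD A D)) (opp_set U B) -> mseteq (ClD A D) B.
  move=> Hb x; split; first exact: HCB.
  move=> Bx; apply: (bicomm C1 CD CZ CM CA) => y Hy.
  have /(HBo y).2 Hy' := Hb y Hy.
  by rewrite (Hy' x Bx).
have CB : forall x, commutant B x -> commutant (ClD A D) x.
  by move=> x Hx z Cz; apply: Hx; apply: HCB.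
split; split.
- move=> H x Hx; have [y Cy ->] := (H x).1 Hx; exists y => //; exact: HCB.
- move=> Hb; have E := K Hb; move=> x; split.
    by move=> Hx; have [y By ->] := Hb x Hx; exists y => //; apply/E.
  move=> [y Cy ->]; apply: CB; apply/(HBo _).2; exists y => //; exact: HCB.
- exact: K.
- move=> E x Hx; apply/(HBo x).1 => z Bz; apply: Hx; exact/E.
Qed.
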